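(* Let $G$ be a cubic graph, let $M$ be a perfect matching cut of $G$, and let $C$ be a $6$-vertex cycle of $G$. If at least three outgoing edges of $V(C)$ belong to $M$, then all outgoing edges of $V(C)$ belong to $M$.
   Context: All graphs are finite, simple and undirected; a graph is cubic if every vertex has exactly three neighbours. A cutset of $G$ is a set $M \subseteq E(G)$ for which there is a bipartition $X \uplus Y = V(G)$ into two nonempty sets such that $M$ is exactly the set of edges with one endpoint in $X$ and one in $Y$. A perfect matching cut is a perfect matching (a set of edges covering every vertex exactly once) that is also a cutset. For $U \subseteq V(G)$, the outgoing edges of $U$ are the edges of $G$ with exactly one endpoint in $U$. *)

(* Defs.v *)
From mathcomp Require Import all_boot.
Set Implicit Arguments. Unset Strict Implicit. Unset Printing Implicit Defensive.

Definition simple_graph (T : finType) (g : rel T) : Prop :=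
  symmetric g /\ irreflexive g.

Definition edges (T : finType) (g : rel T) : {set {set T}} :=
  [set [set p.1; p.2] | p in [set p : T * T | g p.1 p.2]].

Definition cubic (T : finType) (g : rel T) : Prop :=
  forall x : T, #|[set y | g x y]| = 3.

Definition outgoing (T : finType) (g : rel T) (U : {set T}) : {set {set T}} :=
  [set m in edges g | #|m :&: U| == 1].

Definition perfect_matching (T : finType) (g : rel T) (M : {set {set T}}) : Prop :=
  M \subset edges g /\ forall x : T, #|[set m in M | x \in m]| = 1.

Definition cutset (T : finType) (g : rel T) (M : {set {set T}}) : Prop :=
  exists X : {set T}, [/\ X != set0, ~: X != set0 & M = outgoing g X].

Definition perfect_matching_cut (T : finType) (g : rel T) (M : {set {set T}}) : Prop :=
  perfect_matching g M /\ cutset g M.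

Definition cycle6 (T : finType) (g : rel T) (c : 'I_6 -> T) : Prop :=
  injective c /\ forall i : 'I_6, g (c i) (c (ordS i)).

(* Main.v *)
Require Import Defs.
From mathcomp Require Import all_boot.
Set Implicit Arguments. Unset Strict Implicit.
Lemma mem_edges (T : finType) (g : rel T) x y : g x y -> [set x; y] \in edges g.
Proof. by move=> gxy; apply/imsetP; exists (x, y); rewrite ?inE. Qed.
Lemma edgesP (T : finType) (g : rel T) e : e \in edges g -> exists x y, g x y /\ e = [set x; y].
Proof. by case/imsetP => [[x y]]; rewrite inE /= => gxy ->; exists x, y. Qed.
Lemma cross (T : finType) (x y : T) (X : {set T}) : x != y ->
  (#|[set x; y] :&: X| == 1) = ((x \in X) != (y \in X)).
Proof.
move=> nxy.
case: (boolP (x \in X)) => hx; case: (boolP (y \in X)) => hy /=.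
- have ->: [set x; y] :&: X = [set x; y].
    apply/setP => z; rewrite !inE; (case: (eqVneq z x) => [->|zx]; last case: (eqVneq z y) => [->|zy]);
      rewrite ?eqxx ?(negbTE nxy) ?(eq_sym y x) ?(negbTE nxy) ?(negbTE zx) ?(negbTE zy) ?hx ?hy ?(negbTE hx) ?(negbTE hy) //=.
  by rewrite cards2 nxy.
- have ->: [set x; y] :&: X = [set x].
    apply/setP => z; rewrite !inE; (case: (eqVneq z x) => [->|zx]; last case: (eqVneq z y) => [->|zy]);
      rewrite ?eqxx ?(negbTE nxy) ?(eq_sym y x) ?(negbTE nxy) ?(negbTE zx) ?(negbTE zy) ?hx ?hy ?(negbTE hx) ?(negbTE hy) //=.
  by rewrite cards1.
- have ->: [set x; y] :&: X = [set y].
    apply/setP => z; rewrite !inE; (case: (eqVneq z x) => [->|zx]; last case: (eqVneq z y) => [->|zy]);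
      rewrite ?eqxx ?(negbTE nxy) ?(eq_sym y x) ?(negbTE nxy) ?(negbTE zx) ?(negbTE zy) ?hx ?hy ?(negbTE hx) ?(negbTE hy) //=.
  by rewrite cards1.
- have ->: [set x; y] :&: X = set0.
    apply/setP => z; rewrite !inE; (case: (eqVneq z x) => [->|zx]; last case: (eqVneq z y) => [->|zy]);
      rewrite ?eqxx ?(negbTE nxy) ?(eq_sym y x) ?(negbTE nxy) ?(negbTE zx) ?(negbTE zy) ?hx ?hy ?(negbTE hx) ?(negbTE hy) //=.
  by rewrite cards0.
Qed.
Lemma pm_uniq (T : finType) (M : {set {set T}}) x m1 m2 :
  (forall x, #|[set m in M | x \in m]| = 1) -> m1 \in M -> m2 \in M -> x \in m1 -> x \in m2 -> m1 = m2.
Proof.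
move=> H h1 h2 x1 x2; have /eqP/cards1P [m Hm] := H x.
have : m1 \in [set m in M | x \in m] by rewrite inE h1 x1.
have : m2 \in [set m in M | x \in m] by rewrite inE h2 x2.
by rewrite Hm !inE => /eqP -> /eqP ->.
Qed.
Definition tt6 (s : nat -> bool) k := s k != s ((k+1) %% 6).
Lemma key (s : nat -> bool) :
  all (fun k => ~~ (tt6 s k && tt6 s ((k+1)%%6))) (iota 0 6) ->
  3 <= count (fun k => ~~ tt6 s k && ~~ tt6 s ((k+5)%%6)) (iota 0 6) ->
  all (fun k => ~~ tt6 s k) (iota 0 6).
Proof.
rewrite /tt6; vm_compute.
case: (s 0); case: (s 1); case: (s 2); case: (s 3); case: (s 4); case: (s 5); by vm_compute.
Qed.
Lemma card_count (P : pred nat) : #|[set i : 'I_6 | P i]| = count P (iota 0 6).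
Proof.
rewrite -val_enum_ord count_map cardE /enum_mem size_filter count_filter.
by apply: eq_count => i /=; rewrite !inE andbT.
Qed.
Lemma ordS_val (i : 'I_6) : ordS i = inord ((i+1)%%6).
Proof. by apply: val_inj; rewrite /= inordK ?ltn_pmod // addn1. Qed.
Lemma ord_facts (i : 'I_6) : [/\ i != ordS i, i != ordS (ordS i), ordS (ord_pred i) = i, ord_pred i != i & ordS i != ord_pred i].
Proof.
case: i => [[|[|[|[|[|[|k]]]]]] Hk] //; split => //; by apply: val_inj.
Qed.

Theorem lemma5 (T : finType) (g : rel T) (M : {set {set T}}) (c : 'I_6 -> T) :
  simple_graph g -> cubic g -> perfect_matching_cut g M -> cycle6 g c ->
  3 <= #|outgoing g [set c i | i : 'I_6] :&: M| ->
  outgoing g [set c i | i : 'I_6] \subset M.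
Proof.
move=> [gsym girr] Hcub [[HMe HM1] [X [_ _ HMX]]] [cinj ccyc] H3.
set C := [set c i | i : 'I_6].
have ne_of : forall x y, g x y -> x != y.
  by move=> x y gxy; apply/eqP => E; move: gxy; rewrite E girr.
have crossM : forall x y, g x y -> ([set x; y] \in M) = ((x \in X) != (y \in X)).
  by move=> x y gxy; rewrite HMX inE mem_edges //= cross //; exact: ne_of.
pose t := fun i : 'I_6 => (c i \in X) != (c (ordS i) \in X).
have tM : forall i, t i = ([set c i; c (ordS i)] \in M) by move=> i; rewrite crossM ?ccyc.
have cneq : forall i j, i != j -> c i != c j by move=> i j; apply: contra => /eqP /cinj ->.
have HA : forall i, ~~ (t i && t (ordS i)).
  move=> i; apply/negP => /andP[]; rewrite !tM => h1 h2.
  have E := pm_uniq HM1 h1 h2 (set22 _ _) (set21 _ _).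
  have : c i \in [set c (ordS i); c (ordS (ordS i))] by rewrite -E set21.
  case: (ord_facts i) => n1 n2 _ _ _.
  by rewrite !inE (negbTE (cneq _ _ n1)) (negbTE (cneq _ _ n2)).
pose S := [set i | ~~ t i && ~~ t (ord_pred i)].
have HS : 3 <= #|S|.
  apply: (leq_trans H3).
  pose O := outgoing g C :&: M.
  pose h (e : {set T}) := odflt ord0 [pick i | c i \in e].
  have hP : forall e, e \in O -> c (h e) \in e.
    move=> e; rewrite !inE => /andP[/andP[_ He1] _].
    have /cards1P [z Hz] := He1.
    have : z \in e :&: C by rewrite Hz set11.
    rewrite inE => /andP[ze /imsetP[i _ Ez]].
    rewrite /h; case: pickP => [j //|/(_ i)]; by rewrite -Ez ze.
  have hS : forall e, e \in O -> h e \in S.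
    move=> e eO; have ce := hP e eO; move: eO; rewrite !inE => /andP[/andP[_ He1] eM].
    have two : forall j, j != h e -> c j \in e -> False.
      move=> j ji cj; have : [set c (h e); c j] \subset e :&: C.
        by apply/subsetP => z; rewrite !inE => /orP[] /eqP ->; rewrite ?ce ?cj imset_f.
      move/subset_leq_card; rewrite cards2 (eqP He1) (cneq (h e) j) // eq_sym //.
    case: (ord_facts (h e)) => n1 _ n3 n4 _.
    apply/andP; split; apply/negP; rewrite tM => hm.
    - have E := pm_uniq HM1 hm eM (set21 _ _) ce.
      by apply: (two (ordS (h e))); [rewrite eq_sym | move: (set22 (c (h e)) (c (ordS (h e)))); rewrite E].
    - have ci : c (h e) \in [set c (ord_pred (h e)); c (ordS (ord_pred (h e)))] by rewrite n3 set22.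
      have E := pm_uniq HM1 hm eM ci ce.
      by apply: (two (ord_pred (h e))); [ | move: (set21 (c (ord_pred (h e))) (c (ordS (ord_pred (h e))))); rewrite E].
  have hinj : {in O &, injective h}.
    move=> e1 e2 h1 h2 E; have c1 := hP _ h1; have c2 := hP _ h2; rewrite E in c1.
    move: h1 h2; rewrite !inE => /andP[_ m1] /andP[_ m2]; exact: pm_uniq HM1 m1 m2 c1 c2.
  rewrite -(card_in_imset hinj); apply: subset_leq_card.
  by apply/subsetP => i /imsetP[e eO ->]; exact: hS.
have Ht : forall i, ~~ t i.
  pose s k := c (inord k) \in X.
  have ts : forall i : 'I_6, tt6 s i = t i.
    by move=> i; rewrite /tt6 /s /t ordS_val inord_val.
  have tsk : forall k, k < 6 -> tt6 s k = t (inord k).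
    by move=> k hk; rewrite -ts inordK.
  have modS : forall k, k < 6 -> (k+1)%%6 = val (ordS (inord k : 'I_6)).
    by move=> k hk; rewrite /= inordK // addn1.
  have modP : forall k, k < 6 -> (k+5)%%6 = val (ord_pred (inord k : 'I_6)).
    move=> k hk; rewrite /= inordK //. have -> : (k + 6).-1 = k + 5 by rewrite addnS.
    by [].
  have HA' : all (fun k => ~~ (tt6 s k && tt6 s ((k+1)%%6))) (iota 0 6).
    apply/allP => k; rewrite mem_iota add0n => /andP[_ hk].
    by rewrite (modS k hk) ts tsk //; exact: HA.
  have HS' : 3 <= count (fun k => ~~ tt6 s k && ~~ tt6 s ((k+5)%%6)) (iota 0 6).
    rewrite -card_count; apply: (leq_trans HS); apply: subset_leq_card.
    by apply/subsetP => i; rewrite !inE (modP _ (ltn_ord i)) inord_val !ts.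
  move=> i; have := allP (key HA' HS') i.
  by rewrite mem_iota /= ltn_ord ts => /(_ isT).
have main : forall x y, g x y -> x \in C -> y \notin C -> [set x; y] \in M.
  move=> x y gxy /imsetP[i _ Ex] yC; subst x.
  have /eqP/cards1P [m Hm] := HM1 (c i).
  have : m \in [set m in M | c i \in m] by rewrite Hm set11.
  rewrite inE => /andP[mM cim].
  have /edgesP [a [b [gab Em]]] := subsetP HMe m mM.
  have [w [gw Emw]] : exists w, g (c i) w /\ m = [set c i; w].
    move: cim; rewrite Em !inE => /orP[] /eqP E.
      by exists b; rewrite E.
    by exists a; split; [rewrite gsym E | rewrite -E setUC].
  case: (ord_facts i) => _ _ n3 _ n5.
  have : w \in [set c (ordS i); c (ord_pred i); y].
    have sub : [set c (ordS i); c (ord_pred i); y] \subset [set z | g (c i) z].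
      apply/subsetP => z; rewrite !inE  => /orP[/orP[]|] /eqP ->.
      - exact: ccyc.
      - by rewrite gsym -{2}n3 ccyc.
      - exact: gxy.
    have y1 : y != c (ordS i) by apply: contraNneq yC => ->; exact: imset_f.
    have y2 : y != c (ord_pred i) by apply: contraNneq yC => ->; exact: imset_f.
    have c3 : #|[set c (ordS i); c (ord_pred i); y]| = 3.
      by rewrite setUC cardsU1 cards2 !inE negb_or (cneq _ _ n5) y1 y2.
    have E : [set c (ordS i); c (ord_pred i); y] = [set z | g (c i) z].
      by apply/eqP; rewrite eqEcard sub c3 Hcub.
    by rewrite E inE.
  rewrite !inE => /orP[/orP[]|] /eqP Ew.
  - by move: (Ht i); rewrite tM -Ew -Emw mM.
  - by move: (Ht (ord_pred i)); rewrite tM n3 -Ew setUC -Emw mM.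
  - by rewrite -Ew -Emw.
apply/subsetP => e; rewrite inE => /andP[eE He1].
have /edgesP [x [y [gxy Ee]]] := eE.
rewrite Ee cross in He1 *; last exact: ne_of.
move: He1; case hx: (x \in C); case hy: (y \in C) => //= _.
- exact: main x y gxy hx (negbT hy).
- by rewrite setUC; apply: main; [rewrite gsym | rewrite hy | rewrite hx].
Qed.
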